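(* If QEPmin is in the easy case, then CRQopt has a unique minimizer.
   Context: Let $A\in\mathbb{R}^{n\times n}$ be symmetric, $C\in\mathbb{R}^{n\times m}$ ($m<n$) full column rank, $b\in\mathbb{R}^m$, $n_0=C(C^{\top}C)^{-1}b$ with $\|n_0\|<1$, $\gamma=\sqrt{1-\|n_0\|^2}$, $P=I-C(C^{\top}C)^{-1}C^{\top}$ (orthogonal projector onto $\mathcal N(C^{\top})$), $b_0=PAn_0$, assumed nonzero. CRQopt: minimize $v^{\top}Av$ over $v\in\mathbb{R}^n$ subject to $v^{\top}v=1$ and $C^{\top}v=b$. QEPmin: minimize $\lambda$ over pairs $(\lambda,z)$ with $\lambda\in\mathbb{R}$, $0\neq z\in\mathcal N(C^{\top})$ and $(PAP-\lambda I)^2z=\gamma^{-2}b_0b_0^{\top}z$. QEPmin is in the hard case if it has a minimizer $(\lambda_*,z_* )$ with $b_0^{\top}z_*=0$; otherwise it is in the easy case. *)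

(* Defs.v *)
From HB Require Import structures.
From mathcomp Require Import all_boot all_order all_algebra.
From mathcomp Require Import reals.
Set Implicit Arguments. Unset Strict Implicit. Unset Printing Implicit Defensive.
Import Order.TTheory GRing.Theory Num.Theory.
Local Open Scope ring_scope.

Section CRQ.
Variables (R : realType) (n m : nat).
Implicit Types (A : 'M[R]_n) (C : 'M[R]_(n, m)) (b : 'cV[R]_m).

Definition sqnorm (v : 'cV[R]_n) : R := (v^T *m v) 0 0.

Definition n0 C b : 'cV[R]_n := C *m invmx (C^T *m C) *m b.

Definition gam C b : R := Num.sqrt (1 - sqnorm (n0 C b)).

Definition projP C : 'M[R]_n := 1%:M - C *m invmx (C^T *m C) *m C^T.

Definition b0 A C b : 'cV[R]_n := projP C *m A *m n0 C b.

Definition CRQ_feasible C b (v : 'cV[R]_n) : Prop :=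
  sqnorm v = 1 /\ C^T *m v = b.

Definition CRQ_minimizer A C b (v : 'cV[R]_n) : Prop :=
  CRQ_feasible C b v /\
  forall w, CRQ_feasible C b w -> (v^T *m A *m v) 0 0 <= (w^T *m A *m w) 0 0.

Definition QEP_feasible A C b (lam : R) (z : 'cV[R]_n) : Prop :=
  z != 0 /\ C^T *m z = 0 /\
  (let M := projP C *m A *m projP C - lam%:M in
   M *m (M *m z) = (gam C b ^+ 2)^-1 *: (b0 A C b *m (b0 A C b)^T *m z)).

Definition QEP_minimizer A C b (lam : R) (z : 'cV[R]_n) : Prop :=
  QEP_feasible A C b lam z /\
  forall lam' z', QEP_feasible A C b lam' z' -> lam <= lam'.

Definition QEP_hard_case A C b : Prop :=
  exists lam z, QEP_minimizer A C b lam z /\ ((b0 A C b)^T *m z) 0 0 = 0.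

Definition QEP_easy_case A C b : Prop := ~ QEP_hard_case A C b.

End CRQ.

(* Main.v *)
From HB Require Import structures.
From mathcomp Require Import all_boot all_order all_algebra.
From mathcomp Require Import reals.
From mathcomp Require Import classical_sets boolp topology normedtype derive.
From mathcomp Require Import ring lra.
From Stdlib Require Import Classical_Prop.
Require Import Defs.
Import Order.TTheory GRing.Theory Num.Theory.
Import numFieldNormedType.Exports.
Set Implicit Arguments. Unset Strict Implicit. Unset Printing Implicit Defensive.
Local Open Scope ring_scope.
Section Dot.
Context {R : realType} {n : nat}.
Implicit Types (x y z : 'cV[R]_n) (M : 'M[R]_n).

Definition dot x y : R := (x^T *m y) 0 0.

Lemma dotE x y : dot x y = \sum_i x i 0 * y i 0.
Proof. by rewrite /dot mxE; apply: eq_bigr => i _; rewrite mxE. Qed.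

Lemma dotC x y : dot x y = dot y x.
Proof. by rewrite !dotE; apply: eq_bigr => i _; rewrite mulrC. Qed.

Lemma dotDl x y z : dot (x + y) z = dot x z + dot y z.
Proof. by rewrite !dotE -big_split; apply: eq_bigr => i _; rewrite mxE mulrDl. Qed.

Lemma dotDr x y z : dot z (x + y) = dot z x + dot z y.
Proof. by rewrite ![dot z _]dotC dotDl. Qed.

Lemma dotZl a x y : dot (a *: x) y = a * dot x y.
Proof. by rewrite !dotE mulr_sumr; apply: eq_bigr => i _; rewrite mxE mulrA. Qed.

Lemma dotZr a x y : dot y (a *: x) = a * dot y x.
Proof. by rewrite ![dot y _]dotC dotZl. Qed.

Lemma dotNl x y : dot (- x) y = - dot x y.
Proof. by rewrite -scaleN1r dotZl mulN1r. Qed.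

Lemma dotNr x y : dot y (- x) = - dot y x.
Proof. by rewrite -scaleN1r dotZr mulN1r. Qed.

Lemma dotBl x y z : dot (x - y) z = dot x z - dot y z.
Proof. by rewrite dotDl dotNl. Qed.

Lemma dotBr x y z : dot z (x - y) = dot z x - dot z y.
Proof. by rewrite dotDr dotNr. Qed.

Lemma dot0l x : dot 0 x = 0.
Proof. by rewrite -(scale0r 0) dotZl mul0r. Qed.

Lemma dot0r x : dot x 0 = 0.
Proof. by rewrite dotC dot0l. Qed.

Lemma dot_mulmx M x y : dot x (M *m y) = dot (M^T *m x) y.
Proof. by rewrite /dot trmx_mul trmxK mulmxA. Qed.

Lemma dot_ge0 x : 0 <= dot x x.
Proof. by rewrite dotE; apply: sumr_ge0 => i _; rewrite -expr2 sqr_ge0. Qed.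

Lemma dot_eq0 x : dot x x = 0 -> x = 0.
Proof.
rewrite dotE => /eqP; rewrite psumr_eq0; last by move=> i _; rewrite -expr2 sqr_ge0.
move=> /allP H; apply/matrixP => i j; rewrite (ord1 j) mxE.
by have := H i (mem_index_enum _); rewrite -expr2 sqrf_eq0 => /eqP.
Qed.

Lemma dot_gt0 x : x != 0 -> 0 < dot x x.
Proof.
move=> xn0; rewrite lt_neqAle dot_ge0 andbT eq_sym; apply/eqP => /dot_eq0 h.
by rewrite h eqxx in xn0.
Qed.

Lemma mul_dot x y z : x *m (y^T *m z) = dot y z *: x.
Proof.
apply/matrixP => i j; rewrite (ord1 j) !mxE big_ord1 mulrC; congr (_ * _).
Qed.

Lemma dot_sym M x y : M^T = M -> dot x (M *m y) = dot y (M *m x).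
Proof. by move=> HM; rewrite dot_mulmx HM dotC. Qed.

Lemma dot_expand M x y t : M^T = M ->
  dot (x + t *: y) (M *m (x + t *: y)) =
  dot x (M *m x) + 2 * t * dot y (M *m x) + t ^+ 2 * dot y (M *m y).
Proof.
move=> HM; rewrite mulmxDr -scalemxAr !dotDl !dotDr !dotZl !dotZr.
rewrite (dot_sym x y HM); ring.
Qed.

Lemma dot_expand1 x y t :
  dot (x + t *: y) (x + t *: y) = dot x x + 2 * t * dot x y + t ^+ 2 * dot y y.
Proof.
rewrite !dotDl !dotDr !dotZl !dotZr (dotC y x); ring.
Qed.

Lemma dot_expandl x y z t : dot (x + t *: y) z = dot x z + t * dot y z.
Proof. by rewrite dotDl dotZl. Qed.

End Dot.

Lemma dot_mulmxR (R : realType) n p (M : 'M[R]_(n,p)) (x : 'cV[R]_n) (y : 'cV[R]_p) :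
  dot x (M *m y) = dot (M^T *m x) y.
Proof. by rewrite /dot trmx_mul trmxK mulmxA. Qed.

Lemma poly_lim (R : realType) (c0 c1 c2 c3 : R) :
  (forall t, 0 < t -> t <= 1 -> 0 <= c0 + c1 * t + c2 * t ^+ 2 + c3 * t ^+ 3) -> 0 <= c0.
Proof.
move=> H; rewrite leNgt; apply/negP => c0n.
have a1 := normr_ge0 c1; have a2 := normr_ge0 c2; have a3 := normr_ge0 c3.
set B := `|c1| + `|c2| + `|c3|.
have B0 : 0 <= B by rewrite /B; lra.
have den : 0 < 2 * (B - c0 + 1) by lra.
set t := - c0 / (2 * (B - c0 + 1)).
have t0 : 0 < t by rewrite /t divr_gt0 //; lra.
have key : t * (2 * (B - c0 + 1)) = - c0 by rewrite /t divfK // gt_eqF.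
have t1 : t <= 1 by rewrite /t ler_pdivrMr // mul1r; lra.
have := H t t0 t1.
have tt : t ^+ 2 <= t by rewrite expr2 ler_piMl //; lra.
have ttt : t ^+ 3 <= t ^+ 2 by rewrite exprS ler_piMl // ?exprn_ge0 //; lra.
have h1 : c1 * t <= `|c1| * t by rewrite ler_wpM2r ?ler_norm //; lra.
have h2 : c2 * t ^+ 2 <= `|c2| * t.
  apply: le_trans (_ : `|c2| * t ^+ 2 <= _); first by rewrite ler_wpM2r ?ler_norm ?exprn_ge0 //; lra.
  by rewrite ler_wpM2l.
have h3 : c3 * t ^+ 3 <= `|c3| * t.
  apply: le_trans (_ : `|c3| * t ^+ 3 <= _); first by rewrite ler_wpM2r ?ler_norm ?exprn_ge0 //; lra.
  by rewrite ler_wpM2l // (le_trans ttt tt).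
have htc : t * c0 < 0 by rewrite pmulr_rlt0.
move: key; rewrite /B; nra.
Qed.

Lemma kkt_star (R : realType) n m (K : 'M[R]_(n,m)) (H : 'M[R]_n) (g u : 'cV[R]_n) :
  H^T = H -> K^T *m u = 0 ->
  (forall w, K^T *m w = 0 -> dot w w = dot u u ->
      dot u (H *m u) + 2 * dot g u <= dot w (H *m w) + 2 * dot g w) ->
  forall w, K^T *m w = 0 ->
  0 <= (dot w u) ^+ 2 * dot w (H *m w) - dot w u * dot w w * dot w (H *m u + g).
Proof.
move=> HS Su Hmin w Sw.
have [->|wn0] := eqVneq w 0; first by rewrite !dot0l; lra.
have D0 := dot_gt0 wn0.
set a := dot w u; set D := dot w w.
set s := -2 * a / D.
have sD : s * D = -2 * a by rewrite /s divfK // gt_eqF.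
have Sx : K^T *m (u + s *: w) = 0 by rewrite mulmxDr -scalemxAr Sw Su scaler0 addr0.
have Nx : dot (u + s *: w) (u + s *: w) = dot u u.
  rewrite dot_expand1 (dotC u w) -/a -/D.
  have : s ^+ 2 * D = s * (-2 * a) by rewrite -sD expr2 mulrA.
  lra.
have := Hmin _ Sx Nx.
rewrite dot_expand // dotDr dotZr dotDr (dotC w g).
set X := dot w (H *m u); set Y := dot w (H *m w); set Z := dot g w.
move=> ineq.
have ha : a = - (s * D) / 2 by rewrite sD; field.
have -> : a ^+ 2 * Y - a * D * (X + Z) = (D ^+ 2 / 4) * (2 * s * (X + Z) + s ^+ 2 * Y).
  by rewrite ha; field.
apply: mulr_ge0; first by apply: divr_ge0; [exact: sqr_ge0|lra].
lra.
Qed.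

Lemma kkt (R : realType) n m (K : 'M[R]_(n,m)) (H : 'M[R]_n) (g u : 'cV[R]_n) :
  H^T = H -> (forall x : 'cV_n, K^T *m (H *m x) = 0) -> K^T *m g = 0 -> K^T *m u = 0 ->
  0 < dot u u ->
  (forall w, K^T *m w = 0 -> dot w w = dot u u ->
      dot u (H *m u) + 2 * dot g u <= dot w (H *m w) + 2 * dot g w) ->
  exists mu, H *m u + g = mu *: u /\
    forall w, K^T *m w = 0 -> 0 <= dot w (H *m w) - mu * dot w w.
Proof.
move=> HS SH Sg Su N0 Hmin.
have star := kkt_star HS Su Hmin.
set N := dot u u in N0 Hmin star *.
set r := H *m u + g in star *.
have Sr : K^T *m r = 0 by rewrite mulmxDr SH Sg addr0.
set mu := dot r u / N.
set w0 := r - mu *: u.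
have rE : r = w0 + mu *: u by rewrite /w0 subrK.
have Sw0 : K^T *m w0 = 0 by rewrite mulmxBr -scalemxAr Sr Su scaler0 subr0.
have w0u : dot w0 u = 0.
  by rewrite dotBl dotZl /mu -/N divfK ?subrr // gt_eqF.
have SwT w t : K^T *m w = 0 -> K^T *m (w + t *: u) = 0.
  by move=> Sw; rewrite mulmxDr -scalemxAr Sw Su scaler0 addr0.
clearbody w0.
set W := dot w0 w0.
have W0 : W = 0.
  have : 0 <= - W ^+ 2.
    apply: (@poly_lim _ _ (N * dot w0 (H *m w0) - mu * N * W)
       (2 * N * dot u (H *m w0) - N * W) (N * dot u (H *m u) - mu * N ^+ 2)).
    move=> t t0 t1.
    have := star _ (SwT w0 t Sw0).
    rewrite dot_expandl w0u dot_expand1 w0u dot_expand // dot_expandl.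
    rewrite rE dotDr dotZr w0u dotDr dotZr -/N (dotC u w0) w0u -/W.
    have tN : 0 < t * N by rewrite mulr_gt0.
    move=> h; rewrite -(pmulr_rge0 _ tN); move: h.
    set P1 := dot w0 (H *m w0); set P2 := dot u (H *m w0); set P3 := dot u (H *m u).
    suff -> : (0 + t * N) ^+ 2 * (P1 + 2 * t * P2 + t ^+ 2 * P3) -
      (0 + t * N) * (W + 2 * t * 0 + t ^+ 2 * N) * (W + mu * 0 + t * (0 + mu * N))
      = t * N * (- W ^+ 2 + (N * P1 - mu * N * W) * t + (2 * N * P2 - N * W) * t ^+ 2 +
                 (N * P3 - mu * N ^+ 2) * t ^+ 3) by [].
    ring.
  have := sqr_ge0 W; nra.
have w00 : w0 = 0 by apply: dot_eq0.
have rmu : r = mu *: u by rewrite rE w00 add0r.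
exists mu; split; first by [].
move=> w Sw.
have starmu x : K^T *m x = 0 ->
    0 <= dot x u ^+ 2 * (dot x (H *m x) - mu * dot x x).
  move=> Sx; have := star _ Sx; rewrite rmu dotZr.
  suff -> : dot x u ^+ 2 * (dot x (H *m x) - mu * dot x x) =
     dot x u ^+ 2 * dot x (H *m x) - dot x u * dot x x * (mu * dot x u) by [].
  ring.
have [a0|an0] := eqVneq (dot w u) 0; last first.
  by have := starmu _ Sw; rewrite pmulr_rge0 // lt_neqAle sqr_ge0 andbT eq_sym sqrf_eq0.
apply: (@poly_lim _ _ (2 * dot u (H *m w)) (dot u (H *m u) - mu * N) 0).
move=> t t0 t1.
have tN : 0 < (t * N) ^+ 2 by rewrite exprn_gt0 // mulr_gt0.
have := starmu _ (SwT w t Sw).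
rewrite dot_expandl a0 dot_expand // dot_expand1 a0 -/N add0r pmulr_rge0 //.
suff -> : dot w (H *m w) + 2 * t * dot u (H *m w) + t ^+ 2 * dot u (H *m u) -
  mu * (dot w w + 2 * t * 0 + t ^+ 2 * N) =
  dot w (H *m w) - mu * dot w w + 2 * dot u (H *m w) * t + (dot u (H *m u) - mu * N) * t ^+ 2 + 0 * t ^+ 3 by [].
ring.
Qed.

Lemma ident (R : realType) n (H : 'M[R]_n) (g x x0 : 'cV[R]_n) l :
  H^T = H -> H *m x0 + g = l *: x0 -> dot x x = dot x0 x0 ->
  (dot x (H *m x) + 2 * dot g x) - (dot x0 (H *m x0) + 2 * dot g x0) =
  dot (x - x0) (H *m (x - x0)) - l * dot (x - x0) (x - x0).
Proof.
move=> HS Hx0 Nx.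
have xE : x = x0 + 1 *: (x - x0) by rewrite scale1r addrC subrK.
move: (x - x0) xE => d xE.
have gE : g = l *: x0 - H *m x0 by rewrite -Hx0 addrC addKr.
move: Nx; rewrite xE dot_expand // dot_expand1 gE !dotBl !dotZl !dotDr !dotZr.
rewrite (dotC (H *m x0) d) (dotC (H *m x0) x0) (dotC x0 d).
move=> h; have : 2 * dot d x0 + dot d d = 0 by lra.
move=> h2; nra.
Qed.

Lemma psd_ker (R : realType) n m (K : 'M[R]_(n,m)) (H : 'M[R]_n) mu (w0 : 'cV[R]_n) :
  H^T = H -> (forall x : 'cV_n, K^T *m (H *m x) = 0) ->
  (forall w, K^T *m w = 0 -> 0 <= dot w (H *m w) - mu * dot w w) ->
  K^T *m w0 = 0 -> dot w0 (H *m w0) - mu * dot w0 w0 = 0 ->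
  H *m w0 - mu *: w0 = 0.
Proof.
move=> HS SH Hpsd Sw0 Qw0.
set y := H *m w0 - mu *: w0.
have Sy : K^T *m y = 0 by rewrite /y mulmxBr SH -scalemxAr Sw0 scaler0 subr0.
have St t : K^T *m (w0 + t *: y) = 0 by rewrite mulmxDr -scalemxAr Sy scaler0 addr0.
set c := dot y (H *m y) - mu * dot y y.
have c0 : 0 <= c := Hpsd _ Sy.
set B := dot y y.
have key t : 0 <= 2 * t * B + t ^+ 2 * c.
  have := Hpsd _ (St t); rewrite dot_expand // dot_expand1.
  have -> : dot y (H *m w0) = B + mu * dot w0 y.
    by rewrite /B {2}/y dotBr dotZr (dotC y w0); ring.
  rewrite /c; move: Qw0; lra.
set t := - B / (c + 1).
have tc : t * (c + 1) = - B by rewrite /t divfK // gt_eqF //; lra.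
have := key t; have B0 : 0 <= B := dot_ge0 y.
move=> h; have : B = 0 by nra.
exact: dot_eq0.
Qed.

Section Exist.
Local Open Scope classical_set_scope.
Lemma cont_sum (R : realType) (T : topologicalType) (I : finType) (F : I -> T -> R) :
  (forall i, continuous (F i)) -> continuous (fun x => \sum_i F i x).
Proof.
move=> Fc x.
rewrite [X in continuous_at x X](_ : _ = fun x => \sum_(i <- enum I) F i x); last first.
  by apply/funext => y; rewrite big_enum.
elim: (enum I) => [|a s IH].
  rewrite (_ : (fun x => _) = fun=> 0); last by apply/funext=> y; rewrite big_nil.
  exact: cvg_cst.
rewrite (_ : (fun x => _) = (fun y => F a y + \sum_(i <- s) F i y)); last first.
  by apply/funext=> y; rewrite big_cons.
by apply: cvgD; [exact: Fc|exact: IH].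
Qed.

Lemma contM (R: realType) (T: topologicalType) (f g : T -> R) :
  continuous f -> continuous g -> continuous (fun x => f x * g x).
Proof. move=> fc gc x; exact: (continuousM (fc x) (gc x)). Qed.

Lemma coordc (R: realType) n (j : 'I_n) : continuous (fun r : 'rV[R]_n => r 0 j).
Proof. exact: coord_continuous. Qed.

Lemma cstc (R: realType) (T: topologicalType) (c : R) : continuous (fun _ : T => c).
Proof. move=> x; exact: cvg_cst. Qed.

Arguments cont_sum {R T I F} _.
Arguments contM {R T f g} _ _.
Arguments coordc {R n} j.
Arguments cstc {R T} c.

Lemma sqnormE (R : realType) n (v : 'cV[R]_n) : sqnorm v = \sum_i v i 0 ^+ 2.
Proof. by rewrite /sqnorm mxE; apply: eq_bigr => i _; rewrite !mxE expr2. Qed.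

Lemma crq_exists (R : realType) n m (A : 'M[R]_n) (C : 'M[R]_(n,m)) b :
  (exists v, CRQ_feasible C b v) -> exists v, CRQ_minimizer A C b v.
Proof.
move=> [v0 Fv0].
pose F := [set r : 'rV[R]_n | CRQ_feasible C b r^T].
pose f := fun r : 'rV[R]_n => (r *m A *m r^T) 0 0.
have fE : f = fun r => \sum_k (\sum_j r 0 j * A j k) * r 0 k.
  by apply/funext => r; rewrite /f mxE; apply: eq_bigr => k _; rewrite !mxE.
have fc : continuous f.
  rewrite fE.
  have H1 k j : continuous (fun r : 'rV[R]_n => r 0 j * A j k).
    exact: (contM (coordc j) (cstc (A j k))).
  have H2 k : continuous (fun r : 'rV[R]_n => (\sum_j r 0 j * A j k) * r 0 k).
    exact: (contM (cont_sum (H1 k)) (coordc k)).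
  exact: (cont_sum H2).
have FE : F = (\bigcap_(i in setT) ((fun r : 'rV[R]_n => (C^T *m r^T) i 0) @^-1` [set b i 0]))
     `&` ((fun r : 'rV[R]_n => \sum_i r 0 i ^+ 2) @^-1` [set 1]).
  apply/seteqP; split => r /=.
    move=> [Hn Hc]; split; last by rewrite -Hn sqnormE; apply: eq_bigr => i _; rewrite mxE.
    by move=> i _; rewrite /preimage /= Hc.
  move=> [Hc Hn]; split; first by rewrite sqnormE -Hn; apply: eq_bigr => i _; rewrite mxE.
  by apply/matrixP => i j; rewrite (ord1 j); exact: Hc.
have Fcl : closed F.
  rewrite FE; apply: closedI.
    apply: closed_bigI => i _; apply: preimage_closed; last exact: closed_eq.
    move=> r _; rewrite (_ : (fun r : 'rV[R]_n => _) = fun r => \sum_j C^T i j * r 0 j); last first.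
      by apply/funext => y; rewrite mxE; apply: eq_bigr => j _; rewrite !mxE.
    exact: (cont_sum (fun j => contM (cstc (C^T i j)) (coordc j))).
  apply: preimage_closed; last exact: closed_eq.
  move=> r _.
  have H j : continuous (fun r : 'rV[R]_n => r 0 j ^+ 2).
    rewrite (_ : (fun r : 'rV[R]_n => r 0 j ^+ 2) = fun r => r 0 j * r 0 j); last by apply/funext=> z; rewrite expr2.
    exact: (contM (coordc j) (coordc j)).
  exact: (cont_sum H).
have Fb : bounded_set F.
  exists 1; split => // M M1 r [Hn _].
  change (mx_norm r <= M); rewrite mx_normrE; apply: bigmax_le; first by apply: ltW; apply: lt_trans M1.
  case=> i j /= _; rewrite (ord1 i) ; apply: ltW; apply: le_lt_trans M1.
  have : r 0 j ^+ 2 <= 1.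
    rewrite -Hn sqnormE (bigD1 j) //= mxE lerDl; apply: sumr_ge0 => k _; exact: sqr_ge0.
  by move=> h; rewrite ler_norml; apply/andP; split; nra.
have F0 : F !=set0 by exists v0^T; rewrite /F /= trmxK.
have [c Fc cmin] := EVT_min_rV F0 (bounded_closed_compact Fb Fcl) (continuous_subspaceT fc).
exists c^T; split; first by move: Fc; rewrite inE.
move=> w Fw; have := cmin w^T; rewrite inE /F /= trmxK => /(_ Fw).
by rewrite /f !trmxK.
Qed.

End Exist.

Theorem theorem2p13 (R : realType) (n m : nat)
  (A : 'M[R]_n) (C : 'M[R]_(n, m)) (b : 'cV[R]_m) :
  A^T = A ->
  (m < n)%N ->
  \rank C = m ->
  sqnorm (n0 C b) < 1 ->
  b0 A C b != 0 ->
  QEP_easy_case A C b ->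
  exists v : 'cV[R]_n,
    CRQ_minimizer A C b v /\ (forall w, CRQ_minimizer A C b w -> w = v).
Proof.
move=> AS mn rC nn1 b0n0 Heasy.
set X := invmx (C^T *m C).
have U : C^T *m C \in unitmx.
  rewrite -row_free_unit; apply: inj_row_free => v Hv.
  have y0 : v *m C^T = 0.
    have : dot (v *m C^T)^T (v *m C^T)^T = 0.
      by rewrite /dot trmxK trmx_mul trmxK !mulmxA -(mulmxA v) Hv mul0mx mxE.
    by move/dot_eq0 => /(congr1 trmx); rewrite trmxK trmx0.
  have rf : row_free C^T by rewrite /row_free mxrank_tr rC.
  by apply/eqP; rewrite -(mulmx_free_eq0 _ rf) y0.
have XT : X^T = X by rewrite /X trmx_inv trmx_mul trmxK.
have CX : C^T *m C *m X = 1%:M := mulmxV U.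
have PT : (projP C)^T = projP C.
  by rewrite /projP linearB /= trmx1 !trmx_mul trmxK XT mulmxA.
have CP : C^T *m projP C = 0.
  by rewrite /projP mulmxBr mulmx1 !mulmxA CX mul1mx subrr.
have Pu (u : 'cV_n) : C^T *m u = 0 -> projP C *m u = u.
  by move=> Su; rewrite /projP mulmxBl mul1mx -!mulmxA Su !mulmx0 subr0.
set nn := n0 C b.
have nnE : nn = C *m (X *m b) by rewrite /nn /n0 mulmxA.
have Cn : C^T *m nn = b by rewrite nnE !mulmxA CX mul1mx.
have Pv v : C^T *m v = b -> v = nn + projP C *m v.
  move=> Cv; rewrite /projP mulmxBl mul1mx -!mulmxA Cv nnE.
  by rewrite addrC subrK.
have nnS u : C^T *m u = 0 -> dot nn u = 0.
  by move=> Su; rewrite dotC nnE dot_mulmxR Su dot0l.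
have SP (x : 'cV_n) : C^T *m (projP C *m x) = 0 by rewrite mulmxA CP mul0mx.
set H := projP C *m A *m projP C.
have HT : H^T = H by rewrite /H !trmx_mul PT AS mulmxA.
have SH (x : 'cV_n) : C^T *m (H *m x) = 0 by rewrite /H !mulmxA CP !mul0mx.
set g := b0 A C b.
have gE : g = projP C *m (A *m nn) by rewrite /g /b0 mulmxA.
have Sg : C^T *m g = 0 by rewrite gE SP.
have objE u : C^T *m u = 0 ->
    dot (nn + u) (A *m (nn + u)) = dot u (H *m u) + 2 * dot g u + dot nn (A *m nn).
  move=> Su.
  have e1 : dot u (H *m u) = dot u (A *m u).
    by rewrite /H -!mulmxA (Pu u Su) dot_mulmx PT (Pu u Su).
  have e2 : dot g u = dot u (A *m nn).
    by rewrite gE dotC dot_mulmx PT Pu.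
  have e3 : dot nn (A *m u) = dot u (A *m nn).
    by rewrite dot_mulmx AS dotC.
  rewrite mulmxDr !dotDl !dotDr e1 e2 e3; ring.
have normE u : C^T *m u = 0 -> dot (nn + u) (nn + u) = dot nn nn + dot u u.
  by move=> Su; rewrite !dotDl !dotDr (dotC u nn) (nnS u Su) addr0 add0r.
have objF v : (v^T *m A *m v) 0 0 = dot v (A *m v) by rewrite /dot mulmxA.
set N := 1 - dot nn nn.
have N0 : 0 < N by rewrite /N subr_gt0.
have gam2 : gam C b ^+ 2 = N by rewrite /gam sqr_sqrtr // ltW.
have [e [Se en0]] : exists e : 'cV[R]_n, C^T *m e = 0 /\ e != 0.
  set K := kermx C.
  have Kn0 : K != 0.
    by rewrite -mxrank_eq0 mxrank_ker rC subn_eq0 -ltnNge.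
  have [i Hi] : exists i, row i K != 0.
    case: (pickP (fun i => row i K != 0)) => [i Hi|H0]; first by exists i.
    exfalso; move/negP: Kn0; apply; apply/eqP/row_matrixP => i; rewrite row0.
    by apply/eqP; move: (H0 i) => /negbFE.
  exists (row i K)^T; split.
    by rewrite -trmx_mul -row_mul mulmx_ker row0 trmx0.
  apply: contra Hi => /eqP h; apply/eqP.
  by rewrite -(trmxK (row i K)) h trmx0.
have ee := dot_gt0 en0.
set sc := Num.sqrt N / Num.sqrt (dot e e).
have feas0 : CRQ_feasible C b (nn + sc *: e).
  have Su0 : C^T *m (sc *: e) = 0 by rewrite -scalemxAr Se scaler0.
  split; last by rewrite mulmxDr Cn Su0 addr0.
  rewrite /sqnorm -/(dot _ _) normE // dotZl dotZr /sc.
  have h1 := sqr_sqrtr (ltW N0); have h2 := sqr_sqrtr (ltW ee).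
  have s2 : Num.sqrt (dot e e) != 0 by rewrite sqrtr_eq0 -ltNge.
  rewrite mulrA -expr2 expr_div_n h1 h2 divfK ?gt_eqF // /N; ring.
have [v [[vn1 Cv] vmin]] := crq_exists A (ex_intro _ _ feas0).
set u := projP C *m v.
have Su : C^T *m u = 0 by rewrite /u SP.
have vE : v = nn + u := Pv v Cv.
have uN : dot u u = N.
  by move: vn1; rewrite /sqnorm -/(dot _ _) vE normE // /N => <-; ring.
have Hmin w : C^T *m w = 0 -> dot w w = dot u u ->
    dot u (H *m u) + 2 * dot g u <= dot w (H *m w) + 2 * dot g w.
  move=> Sw wN.
  have Fw : CRQ_feasible C b (nn + w).
    split; last by rewrite mulmxDr Cn Sw addr0.
    by rewrite /sqnorm -/(dot _ _) normE // wN uN /N; ring.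
  have := vmin _ Fw; rewrite !objF vE !objE //.
  lra.
have [mu [Hu Hpsd]] := kkt HT SH Sg Su (ltac:(by rewrite uN)) Hmin.
set Q := fun w => dot w (H *m w) - mu * dot w w.
have SB (x y : 'cV[R]_n) : C^T *m x = 0 -> C^T *m y = 0 -> C^T *m (x - y) = 0.
  by move=> Sx Sy; rewrite mulmxBr Sx Sy subr0.
have qident x : C^T *m x = 0 -> dot x x = N -> 
    (dot x (H *m x) + 2 * dot g x) - (dot u (H *m u) + 2 * dot g u) = Q (x - u).
  by move=> Sx xN; rewrite /Q (ident HT Hu (etrans xN (esym uN))).
case: (classic (exists w0, C^T *m w0 = 0 /\ w0 != 0 /\ Q w0 <= 0)) => [[w0 [Sw0 [w0n0 Qw0]]]|PD].
  exfalso; apply: Heasy.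
  have Qw00 : Q w0 = 0 by apply/eqP; rewrite eq_le Qw0 Hpsd.
  have Hw0 := psd_ker HT SH Hpsd Sw0 Qw00.
  have Hw0' : H *m w0 = mu *: w0 by apply/eqP; rewrite -subr_eq0 Hw0.
  have gu : g = mu *: u - H *m u by rewrite -Hu addrC addKr.
  have gw0 : dot g w0 = 0.
    rewrite gu dotBl dotZl (dotC (H *m u)) (dot_sym _ _ HT) Hw0' dotZr (dotC u w0).
    by rewrite subrr.
  exists mu, w0; split; last by [].
  split.
    split; first by [].
    split; first by [].
    have Mw0 : (H - mu%:M) *m w0 = 0 by rewrite mulmxBl mul_scalar_mx.
    rewrite /= -/H -/g Mw0 mulmx0 -mulmxA mul_dot gw0 scale0r.
    by rewrite scaler0.
  move=> lam' z' [z'n0 [Sz' Hz']].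
  rewrite leNgt; apply/negP => hlt.
  have Mz (x : 'cV[R]_n) : (H - lam'%:M) *m x = H *m x - lam' *: x.
    by rewrite mulmxBl mul_scalar_mx.
  move: Hz'; rewrite /= -/H -/g gam2 !Mz -mulmxA mul_dot.
  set y := H *m z' - lam' *: z'.
  set al := dot g z'.
  move=> Hy.
  have Sy : C^T *m y = 0 by rewrite /y SB // -scalemxAr Sz' scaler0.
  have yy : dot y y = N^-1 * al ^+ 2.
    rewrite {1}/y dotBl dotZl (dotC (H *m z')) (dot_sym _ _ HT) -dotZr -dotBr Hy.
    by rewrite !dotZr (dotC z' g) -/al; ring.
  have zz := dot_gt0 z'n0.
  have [al0|aln0] := eqVneq al 0.
    have y0 : y = 0 by apply: dot_eq0; rewrite yy al0; ring.
    have Hz : H *m z' = lam' *: z' by apply/eqP; rewrite -subr_eq0 -/y y0.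
    have := Hpsd _ Sz'; rewrite Hz dotZr.
    nra.
  set u' := (- (N / al)) *: y.
  have Su' : C^T *m u' = 0 by rewrite -scalemxAr Sy scaler0.
  have e1 : H *m u' - lam' *: u' = - g.
    rewrite /u' -scalemxAr (scalerA lam') (mulrC lam') -scalerA -scalerBr Hy !scalerA.
    have -> : - (N / al) * N^-1 * al = -1 by field; rewrite aln0 gt_eqF.
    by rewrite scaleN1r.
  have Hu' : H *m u' + g = lam' *: u'.
    by rewrite -[H *m u'](subrK (lam' *: u')) e1 addrAC addNr add0r.
  have u'N : dot u' u' = N.
    by rewrite /u' dotZl dotZr yy; field; rewrite gt_eqF // aln0.
  have qle := Hmin _ Su' (etrans u'N (esym uN)).
  have id2 := ident HT Hu' (etrans uN (esym u'N)).
  have Qd := Hpsd _ (SB _ _ Su Su').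
  set d := u - u' in id2 Qd.
  have dd0 : dot d d = 0.
    apply/eqP; rewrite eq_le dot_ge0 andbT.
    have h : 0 < mu - lam' by rewrite subr_gt0.
    rewrite -(pmulr_rle0 _ h); nra.
  have uu' : u = u' by apply/eqP; rewrite -subr_eq0; apply/eqP; exact: dot_eq0.
  have : (mu - lam') *: u = 0.
    by rewrite scalerBl -Hu {2}uu' -Hu' -uu' subrr.
  move/eqP; rewrite scaler_eq0 subr_eq0 (gt_eqF hlt) /= => /eqP u0.
  by move: uN; rewrite u0 dot0l => N00; rewrite -N00 ltxx in N0.
have PDh w : C^T *m w = 0 -> w != 0 -> 0 < Q w.
  move=> Sw wn0; rewrite ltNge; apply/negP => hle; apply: PD; exists w; split=> //.
exists v; split; first by split.
move=> w' [[w'n1 Cw'] w'min].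
set u' := projP C *m w'.
have Su' : C^T *m u' = 0 by rewrite /u' SP.
have w'E : w' = nn + u' := Pv w' Cw'.
have u'N : dot u' u' = N.
  by move: w'n1; rewrite /sqnorm -/(dot _ _) w'E normE // /N => <-; ring.
have h1 := w'min v (conj vn1 Cv).
have h2 := vmin w' (conj w'n1 Cw').
move: h1 h2; rewrite !objF vE w'E !objE // => h1 h2.
have := qident _ Su' u'N.
have Q0 : Q (u' - u) = 0 by rewrite -qident //; lra.
have : u' - u = 0.
  apply/eqP; apply: contraT => dn0.
  by have := PDh _ (SB _ _ Su' Su) dn0; rewrite Q0 ltxx.
by move/eqP; rewrite subr_eq0 => /eqP ->.
Qed.
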